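(* Let $\mathrm{std}_{surj}:WHA\to WHA_{surj}$ be the $\mathbf Z$-linear map sending a basis substitution $\binom{[y_1^{r_1},\dots,y_k^{r_k}]}{\sigma}$ of $WHA$ to $\binom{[y_1,\dots,y_k]}{\sigma}$ (the top word with its repeated letters removed, the bottom word unchanged). Then $\mathrm{std}_{surj}$ is a Hopf algebra morphism which is the identity on $WHA_{surj}$, hence a Hopf algebra retraction of the inclusion $WHA_{surj}\subset WHA$; moreover it maps $WHA_{inj}$ onto $WHA_{inj}\cap WHA_{surj}=\varphi(MPR)$ and restricts to a Hopf algebra retraction of the inclusion $\varphi(MPR)\subset WHA_{inj}$.
   Context: Words are finite sequences of letters; $*$ denotes concatenation; the support $\mathrm{supp}(\alpha)$ of a word is the set of letters occurring in it. The shuffle product $\alpha\times_{sh}\beta$ of words $\alpha=[c_1,\dots,c_p]$, $\beta=[d_1,\dots,d_q]$ is the sum, with multiplicities, over all ways of choosing $p$ of the $p+q$ positions, of the word obtained by placing the $c$'s in their original order in the chosen positions and the $d$'s in their original order in the remaining ones. A subword of $[a_1,\dots,a_m]$ is a word $[a_{i_1},\dots,a_{i_r}]$ with $i_1<\dots<i_r$. Definition of $dWHA$: Let $\mathcal X$ be a countably infinite alphabet. A substitution is a pair $p=\binom{\rho}{\sigma}$ of words over $\mathcal X$ with $\mathrm{supp}(\rho)=\mathrm{supp}(\sigma)$, considered up to simultaneously renaming the letters of both words by a bijection of $\mathcal X$. $dWHA$ is the free abelian group with basis all substitutions (including the empty substitution $\binom{[\,]}{[\,]}$), graded by $\deg(p)=\#\mathrm{supp}(\rho)$.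 Multiplication: for substitutions $p=\binom{\rho}{\sigma}$, $p'=\binom{\rho'}{\sigma'}$ written with $\mathrm{supp}(\rho)\cap\mathrm{supp}(\rho')=\emptyset$, $m(p\otimes p')=\binom{\rho*\rho'}{\sigma\times_{sh}\sigma'}$, meaning the sum of $\binom{\rho*\rho'}{\gamma}$ over the terms $\gamma$ (with multiplicity) of $\sigma\times_{sh}\sigma'$. The unit is the empty substitution. A good cut of a word $\sigma$ is a factorization $\sigma=\sigma_1*\sigma_2$ with $\mathrm{supp}(\sigma_1)\cap\mathrm{supp}(\sigma_2)=\emptyset$ (the two trivial cuts included). Comultiplication: $\mu(p)=\sum \binom{p^{-1}(\sigma_1)}{\sigma_1}\otimes\binom{p^{-1}(\sigma_2)}{\sigma_2}$, summed over all good cuts $\sigma=\sigma_1*\sigma_2$, where $p^{-1}(\sigma_i)$ is the subword of $\rho$ consisting of all occurrences in $\rho$ of letters of $\mathrm{supp}(\sigma_i)$. Counit: $\varepsilon$ is $1$ on the empty substitution and $0$ on all other substitutions. This is a Hopf algebra. $WHA$ is the sub Hopf algebra of $dWHA$ spanned by the substitutions $\binom{\rho}{\sigma}$ with $\rho=[y_1^{r_1},\dots,y_k^{r_k}]$, $y_1,\dots,y_k$ distinct letters, $r_i\ge1$, where $y^r$ denotes $r$ consecutive copies of $y$. $WHA_{inj}$ (resp. $WHA_{surj}$) is the sub Hopf algebra spanned by those basis substitutions of $WHA$ whose bottom word $\sigma$ (resp. top word $\rho$) has no repeated letter. $\varphi(MPR)$ denotes the sub Hopf algebra of $dWHA$ spanned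 by the substitutions in which neither $\rho$ nor $\sigma$ has a repeated letter (it is the image of the Hopf algebra of permutations $MPR$ under $[t_1,\dots,t_n]\mapsto\binom{[x_1,\dots,x_n]}{[x_{t_1},\dots,x_{t_n}]}$). *)

(* Defs.v *)
From HB Require Import structures.
From mathcomp Require Import all_boot all_algebra.
From mathcomp Require Import freeg.

Set Implicit Arguments.
Unset Strict Implicit.
Unset Printing Implicit Defensive.

Import GRing.Theory.
Local Open Scope ring_scope.

Definition word := seq nat.

Definition rename_by (r w : word) : word := [seq index x (undup r) | x <- w].

Definition normS (p : word * word) : word * word :=
  (rename_by p.1 p.1, rename_by p.1 p.2).

(* (rho, sigma) with supp rho = supp sigma, in canonical form (the letters of
   rho are 0,1,2,... in order of first occurrence).  Every class of
   substitutions modulo renaming has exactly one such representative. *)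
Definition valid_subst (p : word * word) : bool :=
  [&& normS p == p, all (fun x => x \in p.1) p.2 & all (fun x => x \in p.2) p.1].

Definition Subst := {p : word * word | valid_subst p}.

Definition top (p : Subst) : word := (val p).1.
Definition bot (p : Subst) : word := (val p).2.

Definition emptyS : Subst := exist _ ([::], [::]) (erefl true).

Definition mkS (p : word * word) : Subst := insubd emptyS (normS p).

Definition dWHA := {freeg Subst / int}.
(* dWHA (x) dWHA : free abelian group on pairs of basis elements *)
Definition dWHA2 := {freeg (Subst * Subst) / int}.

Definition basis (p : Subst) : dWHA := << p >>.

Definition degS (p : Subst) : nat := size (undup (top p)).

Fixpoint shuffle (s : word) : word -> seq word :=
  match s with
  | [::] => fun t => [:: t]
  | a :: s' =>
      fix sh (t : word) : seq word :=
        match t with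
        | [::] => [:: a :: s']
        | b :: t' => [seq a :: u | u <- shuffle s' t] ++ [seq b :: u | u <- sh t']
        end
  end.

(* The letters of q are shifted by deg p to make the supports disjoint. *)
Definition mulB (p q : Subst) : dWHA :=
  let k := degS p in
  let r' := [seq (k + x)%N | x <- top q] in
  let s' := [seq (k + x)%N | x <- bot q] in
  \sum_(g <- shuffle (bot p) s') basis (mkS (top p ++ r', g)).

Definition wmul (x y : dWHA) : dWHA :=
  fglift (fun p => fglift (fun q => mulB p q) y) x.

Definition wone : dWHA := basis emptyS.

Definition restr (r s1 : word) : word * word := ([seq x <- r | x \in s1], s1).

Definition good_cut (s : word) (i : nat) : bool :=
  ~~ has (fun x => x \in drop i s) (take i s).

Definition coprodB (p : Subst) : dWHA2 :=
  \sum_(i < (size (bot p)).+1 | good_cut (bot p) i)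
     << (mkS (restr (top p) (take i (bot p))), mkS (restr (top p) (drop i (bot p)))) >>.

Definition coprod (x : dWHA) : dWHA2 := fglift coprodB x.

Definition counit (x : dWHA) : int := coeff emptyS x.

Definition isWHA_basis (p : Subst) : Prop :=
  exists (ys rs : seq nat),
    [/\ uniq ys, size rs = size ys, all (fun r => 0 < r)%N rs &
        top p = flatten [seq nseq rn.2 rn.1 | rn <- zip ys rs]].

Definition in_span (P : Subst -> Prop) (x : dWHA) : Prop :=
  forall p, coeff p x != 0 -> P p.

Definition inWHA := in_span isWHA_basis.
Definition inWHA_inj := in_span (fun p => isWHA_basis p /\ uniq (bot p)).
Definition inWHA_surj := in_span (fun p => isWHA_basis p /\ uniq (top p)).
Definition inMPR := in_span (fun p => uniq (top p) /\ uniq (bot p)).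

(* [y1^r1,...,yk^rk] |-> [y1,...,yk] : on WHA this is undup of the top word. *)
Definition stdB (p : Subst) : Subst := mkS (undup (top p), bot p).

Definition std_surj (x : dWHA) : dWHA := fglift (fun p => basis (stdB p)) x.

Definition std_surj2 (t : dWHA2) : dWHA2 :=
  fglift (fun pq => << (stdB pq.1, stdB pq.2) >> : dWHA2) t.

(* Main.v *)
Require Import Defs.
From mathcomp Require Import all_boot all_algebra.
From mathcomp Require Import freeg.
From HB Require Import structures.
Import GRing.Theory.
Local Open Scope ring_scope.

HB.instance Definition _ (M : lmodType int) (f : Subst -> M) :=
  GRing.isAdditive.Build dWHA M (fglift f) (lift_is_additive f).
HB.instance Definition _ (M : lmodType int) (f : (Subst * Subst) -> M) :=
  GRing.isAdditive.Build dWHA2 M (fglift f) (lift_is_additive f).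

Lemma undup_map_in (T1 T2 : eqType) (f : T1 -> T2) (s : seq T1) :
  {in s &, injective f} -> undup (map f s) = map f (undup s).
Proof.
elim: s => //= x s IH inj.
have inj' : {in s &, injective f}.
  by move=> a b ha hb; apply: inj; rewrite inE ?ha ?hb orbT.
have -> : (f x \in map f s) = (x \in s).
  apply/mapP/idP => [[y ys /inj eq]|xs]; last by exists x.
  by rewrite eq ?inE ?eqxx ?ys ?orbT.
by case: (x \in s); rewrite /= IH.
Qed.

Lemma undupK (T : eqType) (s : seq T) : undup (undup s) = undup s.
Proof. exact/undup_id/undup_uniq. Qed.

Lemma map_fix_in (T : eqType) (f : T -> T) (s : seq T) :
  map f s = s -> {in s, forall x, f x = x}.
Proof.
elim: s => //= y s IH [e1 e2] x; rewrite inE => /orP [/eqP ->|/IH] //.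
by apply.
Qed.

Lemma index_iota_le i k : (i <= k)%N -> index i (iota 0 k) = i.
Proof.
rewrite leq_eqVlt => /orP [/eqP ->|lt].
  by rewrite memNindex ?size_iota // mem_iota /= ltnn.
have := @index_uniq _ 0%N i (iota 0 k); rewrite size_iota nth_iota //.
by rewrite add0n => ->; rewrite ?iota_uniq.
Qed.

Lemma map_index_self (u : seq nat) : uniq u -> map (index^~ u) u = iota 0 (size u).
Proof.
move=> uu; apply: (@eq_from_nth _ 0%N); rewrite ?size_map ?size_iota //.
move=> i hi; rewrite (nth_map 0%N) // nth_iota // add0n index_uniq //.
Qed.

Lemma rename_undup r w : rename_by (undup r) w = rename_by r w.
Proof. by rewrite /rename_by undupK. Qed.

Lemma inj_index_undup (r : seq nat) : {in r &, injective (index^~ (undup r))}.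
Proof.
move=> a b ha hb; apply: index_inj; rewrite ?mem_undup //.
Qed.

Lemma undup_rename r : undup (rename_by r r) = rename_by r (undup r).
Proof. by rewrite /rename_by undup_map_in //; apply: inj_index_undup. Qed.

Lemma rename_self_undup r : rename_by r (undup r) = iota 0 (size (undup r)).
Proof. by rewrite /rename_by map_index_self ?undup_uniq. Qed.

Lemma normSK q : normS (normS q) = normS q.
Proof.
case: q => r w; rewrite /normS /=.
have E v : rename_by (rename_by r r) (rename_by r v) = rename_by r v.
  rewrite {1}/rename_by undup_rename rename_self_undup /rename_by -map_comp.
  by apply: eq_map => x /=; rewrite index_iota_le // index_size.
by rewrite !E.
Qed.

Lemma valid_normS q : valid_subst (normS q) =
  all (fun x => x \in (normS q).1) (normS q).2 && all (fun x => x \in (normS q).2) (normS q).1.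
Proof. by rewrite /valid_subst normSK eqxx. Qed.

Lemma val_mkS q : valid_subst (normS q) -> val (mkS q) = normS q.
Proof. by move=> h; rewrite /mkS val_insubd h. Qed.

Lemma mkS_invalid q : ~~ valid_subst (normS q) -> mkS q = emptyS.
Proof. by move=> h; rewrite /mkS /insubd insubN. Qed.

Lemma validP (p : Subst) : normS (val p) = val p /\
  all (fun x => x \in top p) (bot p) /\ all (fun x => x \in bot p) (top p).
Proof.
have := proj2_sig p. rewrite /valid_subst. move=> /and3P [/eqP h1 h2 h3]. by split.
Qed.

Lemma val_stdB p : val (stdB p) = (undup (top p), bot p).
Proof.
have [N [A B]] := validP p.
have Et : rename_by (top p) (top p) = top p := f_equal fst N.
have Eb : rename_by (top p) (bot p) = bot p := f_equal snd N.
have Hn : normS (undup (top p), bot p) = (undup (top p), bot p).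
  rewrite /normS /= !rename_undup Eb; congr (_, _).
  rewrite /rename_by map_id_in // => x; rewrite mem_undup => xt.
  exact: (@map_fix_in _ _ _ Et x xt).
rewrite /stdB val_mkS Hn //.
rewrite /valid_subst Hn eqxx /=.
apply/andP; split.
  by apply: sub_all A => x; rewrite mem_undup.
by apply/allP => x; rewrite mem_undup => /(allP B).
Qed.

Lemma top_stdB p : top (stdB p) = undup (top p).
Proof. by rewrite /top val_stdB. Qed.
Lemma bot_stdB p : bot (stdB p) = bot p.
Proof. by rewrite {1}/bot val_stdB. Qed.

Lemma stdB_empty : stdB emptyS = emptyS.
Proof. by apply: val_inj; rewrite val_stdB. Qed.

Lemma stdB_mkS r s : stdB (mkS (r, s)) = mkS (undup r, s).
Proof.
have En : normS (undup r, s) = (rename_by r (undup r), rename_by r s).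
  by rewrite /normS /= !rename_undup.
have Em : rename_by r (undup r) =i rename_by r r.
  by apply: eq_mem_map; apply: mem_undup.
have Ev : valid_subst (normS (undup r, s)) = valid_subst (normS (r, s)).
  rewrite !valid_normS En /normS /=.
  congr andb; first by apply: eq_all => x; rewrite Em.
  by apply: eq_all_r.
case: (boolP (valid_subst (normS (r, s)))) => h; last first.
  rewrite (mkS_invalid _ h) stdB_empty mkS_invalid //.
  by rewrite Ev.
apply: val_inj; rewrite val_stdB val_mkS ?Ev // En /top /bot val_mkS //=.
by rewrite undup_rename.
Qed.

Lemma stdB_id p : uniq (top p) -> stdB p = p.
Proof.
move=> u; apply: val_inj; rewrite val_stdB undup_id //.
by rewrite /top /bot; case: (val p).
Qed.

HB.instance Definition _ :=
  GRing.isAdditive.Build dWHA dWHA std_surj (lift_is_additive _).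
HB.instance Definition _ :=
  GRing.isAdditive.Build dWHA2 dWHA2 std_surj2 (lift_is_additive _).
Lemma fgliftE (M : lmodType int) (f : Subst -> M) (x : dWHA) :
  fglift f x = \sum_(z <- dom x) coeff z x *: f z.
Proof.
have -> : fglift f x = fglift f (\sum_(z <- dom x) << coeff z x *g z >>).
  by rewrite freeg_sumE.
rewrite raddf_sum; apply: eq_bigr => z _; exact: liftU.
Qed.

Lemma scale_add (M N : lmodType int) (h : {additive M -> N}) (c : int) v :
  h (c *: v) = c *: h v.
Proof. by rewrite -[c]intz !scaler_int raddfMz. Qed.

Lemma CL (M N : lmodType int) (g : Subst -> M) (h : {additive M -> N}) x :
  h (fglift g x) = fglift (fun z => h (g z)) x.
Proof.
rewrite !fgliftE raddf_sum; apply: eq_bigr => z _; exact: scale_add.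
Qed.

Lemma eq_fglift (M : lmodType int) (f g : Subst -> M) x :
  f =1 g -> fglift f x = fglift g x.
Proof. by move=> e; rewrite !fgliftE; apply: eq_bigr => z _; rewrite e. Qed.

Lemma fglift_basis_comp (M : lmodType int) (g : Subst -> M) (h : Subst -> Subst) x :
  fglift g (fglift (fun p => basis (h p)) x) = fglift (fun p => g (h p)) x.
Proof.
rewrite CL; apply: eq_fglift => p /=.
by rewrite /basis liftU scale1r.
Qed.

Lemma std_basis p : std_surj (basis p) = basis (stdB p).
Proof. by rewrite /std_surj /basis liftU scale1r. Qed.

Lemma top_lt p x : x \in top p -> (x < degS p)%N.
Proof.
have [N _] := validP p.
have Et : map (index^~ (undup (top p))) (top p) = top p := f_equal fst N.
move=> xt; have : x \in map (index^~ (undup (top p))) (top p) by rewrite Et.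
by case/mapP => y yt ->; rewrite /degS index_mem mem_undup.
Qed.

Lemma std_mulB p q : std_surj (mulB p q) = mulB (stdB p) (stdB q).
Proof.
have Hd : degS (stdB p) = degS p by rewrite /degS top_stdB undupK.
rewrite /mulB raddf_sum Hd !top_stdB !bot_stdB.
apply: eq_bigr => g _ /=; rewrite std_basis stdB_mkS.
congr (basis (mkS (_, g))).
rewrite undup_cat undup_map_inj; last exact: addnI.
congr (_ ++ _).
apply/all_filterP/allP => x; rewrite mem_undup => /top_lt lt.
apply/mapP => -[y _ e]; rewrite e in lt.
by rewrite ltnNge leq_addr in lt.
Qed.

Lemma std_wmul x y : std_surj (wmul x y) = wmul (std_surj x) (std_surj y).
Proof.
have L : std_surj (wmul x y) = fglift (fun p => std_surj (fglift (mulB p) y)) x.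
  by rewrite /wmul CL.
rewrite L /wmul {3}/std_surj fglift_basis_comp.
apply: eq_fglift => p.
rewrite CL.
rewrite /std_surj fglift_basis_comp.
apply: eq_fglift => q /=; exact: std_mulB.
Qed.

Lemma std2_U pq : std_surj2 << pq >> = << (stdB pq.1, stdB pq.2) >>.
Proof. by rewrite /std_surj2 liftU scale1r. Qed.

Lemma coprodB_std p : coprodB (stdB p) = std_surj2 (coprodB p).
Proof.
rewrite /coprodB raddf_sum bot_stdB top_stdB; apply: eq_bigr => i _ /=.
rewrite std2_U /= /restr !stdB_mkS. by rewrite !filter_undup.
Qed.

Lemma std_coprod x : coprod (std_surj x) = std_surj2 (coprod x).
Proof.
rewrite /coprod /std_surj fglift_basis_comp.
rewrite CL.
by apply: eq_fglift => p; rewrite coprodB_std.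
Qed.

Lemma coeff_sum e (x : dWHA) : coeff e x = \sum_(z <- dom x | z == e) coeff z x.
Proof.
rewrite -[in LHS](freeg_sumE x) raddf_sum [RHS]big_mkcond /=.
apply: eq_bigr => z _; rewrite coeffU.
by case: (z == e); rewrite ?mulr1 ?mulr0.
Qed.

Lemma coeff_std e x : coeff e (std_surj x) = \sum_(z <- dom x | stdB z == e) coeff z x.
Proof.
rewrite /std_surj fgliftE raddf_sum [RHS]big_mkcond /=.
apply: eq_bigr => z _; rewrite coeffZ /basis coeffU mul1r.
by case: (stdB z == e); rewrite ?mulr1 ?mulr0.
Qed.

Lemma stdB_eq_empty z : (stdB z == emptyS) = (z == emptyS).
Proof.
apply/eqP/eqP => [h|->]; last exact: stdB_empty.
have hb : bot z = [::] by rewrite -bot_stdB h.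
have [_ [_ B]] := validP z.
rewrite hb in B.
have ht : top z = [::] by move: B; case: (top z).
apply: val_inj; move: ht hb; rewrite /top /bot /=; case: (val z) => a b /= -> ->.
by [].
Qed.

Lemma std_support x p : coeff p (std_surj x) != 0 ->
  exists z, coeff z x != 0 /\ stdB z = p.
Proof.
rewrite coeff_std => h.
have : has (fun z => (stdB z == p) && (coeff z x != 0)) (dom x).
  apply/negPn/negP => /hasPn H; move/eqP: h; apply.
  rewrite big1_seq // => z /andP [e zd]; have := H z zd.
  by rewrite e /= negbK => /eqP.
by case/hasP => z zd /andP [/eqP e c]; exists z.
Qed.

Lemma std_id x : (forall p, coeff p x != 0 -> uniq (top p)) -> std_surj x = x.
Proof.
move=> H; rewrite /std_surj fgliftE.
transitivity (\sum_(z <- dom x) << coeff z x *g z >>); last exact: freeg_sumE.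
apply: eq_big_seq => z zd.
rewrite stdB_id; last by apply: H; rewrite -mem_dom.
by apply/eqP/freeg_eqP => y; rewrite coeffZ !coeffU mul1r.
Qed.

Lemma isWHA_uniq p : uniq (top p) -> isWHA_basis p.
Proof.
move=> u; exists (top p), (nseq (size (top p)) 1%N); split => //.
- by rewrite size_nseq.
- by apply/allP => r; rewrite mem_nseq => /andP [_ /eqP ->].
- by elim: (top p) => //= a t {1}->.
Qed.

Theorem proposition10p3 :
  (* std_surj maps WHA into WHA_surj *)
  (forall x, inWHA x -> inWHA_surj (std_surj x)) /\
  (* it is a morphism of algebras on WHA *)
  (forall x y, inWHA x -> inWHA y ->
     std_surj (wmul x y) = wmul (std_surj x) (std_surj y)) /\
  std_surj wone = wone /\
  (* and of coalgebras *)
  (forall x, inWHA x -> coprod (std_surj x) = std_surj2 (coprod x)) /\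
  (forall x, inWHA x -> counit (std_surj x) = counit x) /\
  (* it is the identity on WHA_surj (retraction of WHA_surj ⊂ WHA) *)
  (forall x, inWHA_surj x -> std_surj x = x) /\
  (* WHA_inj ∩ WHA_surj = φ(MPR) *)
  (forall x, (inWHA_inj x /\ inWHA_surj x) <-> inMPR x) /\
  (* std_surj maps WHA_inj onto φ(MPR) *)
  (forall x, inWHA_inj x -> inMPR (std_surj x)) /\
  (forall y, inMPR y -> exists x, inWHA_inj x /\ std_surj x = y) /\
  (* restriction: a retraction of φ(MPR) ⊂ WHA_inj *)
  (forall x, inMPR x -> inWHA_inj x /\ std_surj x = x).
Proof.
split; [move=> x _ p /std_support [z [_ <-]]; split;
  [apply: isWHA_uniq|]; rewrite top_stdB undup_uniq //|].
split; [move=> x y _ _; exact: std_wmul|].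
split; [by rewrite /wone std_basis stdB_empty|].
split; [move=> x _; exact: std_coprod|].
split; [move=> x _; rewrite /counit coeff_std coeff_sum;
  by apply: eq_bigl => z; rewrite stdB_eq_empty|].
split; [move=> x H; apply: std_id => p c; exact: (H p c).2|].
split; [move=> x; split; [move=> [Hi Hs] p c; split; [exact: (Hs p c).2|exact: (Hi p c).2]
  |move=> H; split => p c; have [u1 u2] := H p c; split => //; exact: isWHA_uniq]|].
split; [move=> x Hx p /std_support [z [c <-]]; split;
  [by rewrite top_stdB undup_uniq|by rewrite bot_stdB; exact: (Hx z c).2]|].
have Hm : forall x, inMPR x -> inWHA_inj x /\ std_surj x = x.
  move=> x H; split; first by move=> p c; have [u1 u2] := H p c; split => //; exact: isWHA_uniq.
  by apply: std_id => p c; exact: (H p c).1.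
split; [move=> y Hy; exists y; exact: Hm|exact: Hm].
Qed.
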